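(* Let $m,n\in\mathbb{N}$, $a\in\mathbb{R}$, $b\in(a,\infty)$, $f\in\mathscr A_{m,n}$. Then the function $$\mathbb{R}^m\times\mathbb{R}^{n-1}\ni(\theta,x_1,\dots,x_{n-1})\mapsto\int_a^bf(\theta,x_1,\dots,x_n)\,\mathrm dx_n\in\mathbb{R}$$ belongs to $\mathscr A_{m,n-1}$.
   Context: For $n\in\mathbb{N}_0$, $\mathcal P_n$ denotes the set of polynomials $\mathbb{R}^n\to\mathbb{R}$ (with $\mathbb{R}^0=\{0\}$). For $n\in\mathbb{N}$, $\mathcal R_n$ is the set of functions $R\colon\mathbb{R}^n\to\mathbb{R}$ for which there exist $P,Q\in\mathcal P_n$ with $R(x)=P(x)/Q(x)$ if $Q(x)\neq0$ and $R(x)=0$ if $Q(x)=0$. For $m\in\mathbb{N}$, $n\in\mathbb{N}_0$, $\mathscr A_{m,n}$ is the real linear span of all functions $g\colon\mathbb{R}^m\times\mathbb{R}^n\to\mathbb{R}$ of the form $g(\theta,x)=R(\theta)Q(x)\prod_{i=1}^r\mathbb 1_{A_i}\big(P_{i,0}(\theta)+\sum_{j=1}^nP_{i,j}(\theta)x_j\big)$ with $r\in\mathbb{N}$, $A_1,\dots,A_r\in\{\{0\},[0,\infty),(0,\infty)\}$, $R\in\mathcal R_m$, $Q\in\mathcal P_n$, $P_{i,j}\in\mathcal P_m$. *)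

(* Defs.v *)
From Stdlib Require Import Reals.
From Coquelicot Require Import Coquelicot.
From mathcomp Require Import ssreflect ssrfun ssrbool eqtype ssrnat seq fintype.
Set Implicit Arguments.
Unset Strict Implicit.
Local Open Scope R_scope.

Definition vec (n : nat) := 'I_n -> R.

Inductive is_poly (n : nat) : (vec n -> R) -> Prop :=
| poly_const (c : R) : is_poly (fun _ => c)
| poly_coord (i : 'I_n) : is_poly (fun x => x i)
| poly_add p q : is_poly p -> is_poly q -> is_poly (fun x => p x + q x)
| poly_mul p q : is_poly p -> is_poly q -> is_poly (fun x => p x * q x)
| poly_ext p q : is_poly p -> (forall x, p x = q x) -> is_poly q.

(* R_n : "rational functions", P/Q where Q <> 0 and 0 where Q = 0 *)
Definition is_rat (n : nat) (F : vec n -> R) : Prop :=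
  exists P Q : vec n -> R, is_poly P /\ is_poly Q /\
    forall x, F x = if Req_EM_T (Q x) 0 then 0 else P x / Q x.

Inductive ind_set := IZero | INonneg | IPos.

Definition ind (A : ind_set) (y : R) : R :=
  match A with
  | IZero => if Req_EM_T y 0 then 1 else 0
  | INonneg => if Rle_dec 0 y then 1 else 0
  | IPos => if Rlt_dec 0 y then 1 else 0
  end.

Definition affine_form (m n : nat) (P0 : vec m -> R) (P : 'I_n -> vec m -> R)
  (theta : vec m) (x : vec n) : R :=
  P0 theta + List.fold_right Rplus 0 (map (fun j => P j theta * x j) (enum 'I_n)).

Record factor (m n : nat) := Factor {
  f_set : ind_set;
  f_P0 : vec m -> R;
  f_P : 'I_n -> vec m -> R }.

Definition factor_ok (m n : nat) (c : factor m n) : Prop :=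
  is_poly (f_P0 c) /\ forall j, is_poly (f_P c j).

Definition eval_factor (m n : nat) (c : factor m n) (theta : vec m) (x : vec n) : R :=
  ind (f_set c) (affine_form (f_P0 c) (f_P c) theta x).

Definition is_generator (m n : nat) (g : vec m -> vec n -> R) : Prop :=
  exists (Rf : vec m -> R) (Q : vec n -> R) (cs : list (factor m n)),
    is_rat Rf /\ is_poly Q /\ cs <> nil /\ (forall c, List.In c cs -> factor_ok c) /\
    forall theta x, g theta x =
      Rf theta * Q x * List.fold_right Rmult 1 (map (fun c => eval_factor c theta x) cs).

Inductive in_A (m n : nat) : (vec m -> vec n -> R) -> Prop :=
| A_zero : in_A (fun _ _ => 0)
| A_gen g : is_generator g -> in_A g
| A_add f g : in_A f -> in_A g -> in_A (fun t x => f t x + g t x)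
| A_scal (c : R) f : in_A f -> in_A (fun t x => c * f t x)
| A_ext f g : in_A f -> (forall t x, f t x = g t x) -> in_A g.

(* (x_1,...,x_{n}) , t  |->  (x_1,...,x_n,t) in R^{n+1} *)
Definition snoc (n : nat) (x : vec n) (t : R) : vec n.+1 :=
  fun i => match unlift ord_max i with Some j => x j | None => t end.

(* Main.v *)
Require Import Defs.
From Stdlib Require Import Reals Lra.
From Coquelicot Require Import Coquelicot.
From mathcomp Require Import ssreflect ssrfun ssrbool eqtype ssrnat seq fintype.
Set Implicit Arguments.
Unset Strict Implicit.
Local Open Scope R_scope.


Definition sumL {I : Type} (s : list I) (F : I -> R) : R :=
  List.fold_right Rplus 0 (map F s).
Definition prodl (l : list R) : R := List.fold_right Rmult 1 l.

Lemma sumL_add {I : Type} (s : list I) F G :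
  sumL s (fun j => F j + G j) = sumL s F + sumL s G.
Proof. elim: s => [|j s IH] /=; rewrite /sumL /= ?IH; [lra|]. rewrite /sumL in IH. rewrite IH. lra. Qed.

Lemma sumL_scal {I : Type} (s : list I) c F :
  sumL s (fun j => c * F j) = c * sumL s F.
Proof. elim: s => [|j s IH] /=; rewrite /sumL /=; [lra|]. rewrite /sumL in IH. rewrite IH. lra. Qed.

Lemma sumL_ext {I : Type} (s : list I) F G :
  (forall j, F j = G j) -> sumL s F = sumL s G.
Proof. move=> H; elim: s => [|j s IH] //=; rewrite /sumL /= H. rewrite /sumL in IH; by rewrite IH. Qed.

Lemma sumL_zero {I : Type} (s : list I) : sumL s (fun _ => 0) = 0.
Proof. elim: s => [|j s IH] //=; rewrite /sumL /=. rewrite /sumL in IH; rewrite IH; lra. Qed.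

Lemma sumL_app {I : Type} (s1 s2 : list I) F : sumL (s1 ++ s2) F = sumL s1 F + sumL s2 F.
Proof. elim: s1 => [|j s IH] /=; rewrite /sumL /=; [lra|]. rewrite /sumL in IH; rewrite IH; lra. Qed.

Lemma prodl_app (l1 l2 : list R) : prodl (l1 ++ l2) = prodl l1 * prodl l2.
Proof. elim: l1 => [|j s IH] /=; rewrite /prodl /=; [lra|]. rewrite /prodl in IH; rewrite IH; lra. Qed.

Definition inv (y : R) : R := if Req_EM_T y 0 then 0 else / y.

Lemma is_rat_mul m (F G : vec m -> R) : is_rat F -> is_rat G -> is_rat (fun t => F t * G t).
Proof.
move=> [P [Q [HP [HQ HF]]]] [P' [Q' [HP' [HQ' HG]]]].
exists (fun t => P t * P' t), (fun t => Q t * Q' t); split; [by constructor|split; [by constructor|]].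
move=> t; rewrite HF HG.
destruct (Req_dec_T (Q t) 0) as [h1|h1]; destruct (Req_dec_T (Q' t) 0) as [h2|h2];
destruct (Req_dec_T (Q t * Q' t) 0) as [h3|h3]; simpl; try lra;
try (exfalso; apply h3; rewrite ?h1 ?h2; lra);
try (exfalso; case: (Rmult_integral _ _ h3); lra).
field; lra.
Qed.

Lemma is_rat_poly m (P : vec m -> R) : is_poly P -> is_rat P.
Proof.
move=> HP; exists P, (fun _ => 1); split=> //; split; first by constructor.
move=> t; destruct (Req_dec_T 1 0) as [h|h]; simpl; [lra|]; field.
Qed.

Lemma is_rat_inv m (P : vec m -> R) : is_poly P -> is_rat (fun t => inv (P t)).
Proof.
move=> HP; exists (fun _ => 1), P; split; first by constructor. split=> // t.
rewrite /inv; destruct (Req_dec_T (P t) 0) as [h|h]; simpl; [done|field; lra].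
Qed.

Definition trivial_factor m n : factor m n := Factor IZero (fun _ => 0) (fun _ _ => 0).

Lemma affine_zero m n theta (x : vec n) :
  affine_form (fun _ : vec m => 0) (fun _ _ => 0) theta x = 0.
Proof.
change (0 + sumL (enum 'I_n) (fun j => 0 * x j) = 0).
rewrite (@sumL_ext _ _ _ (fun _ => 0)) ?sumL_zero => *; lra.
Qed.

Lemma gen_of m n (Rf : vec m -> R) (Q : vec n -> R) :
  is_rat Rf -> is_poly Q -> in_A (fun t x => Rf t * Q x).
Proof.
move=> HR HQ; apply: A_gen; exists Rf, Q, [:: trivial_factor m n].
do 3 (split=> //). split.
  move=> c [<-|[]]; split=> [|j]; exact: poly_const.
move=> t x /=. rewrite /eval_factor /= affine_zero /=.
destruct (Req_dec_T 0 0) as [h|h]; simpl; [|lra]. lra.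
Qed.

Lemma A_rat m n (Rf : vec m -> R) : is_rat Rf -> in_A (fun t (x : vec n) => Rf t).
Proof. move=> H; apply: A_ext (gen_of H (poly_const _ 1)) _ => t x; lra. Qed.

Lemma A_polyx m n (Q : vec n -> R) : is_poly Q -> in_A (fun (t : vec m) x => Q x).
Proof.
move=> H; apply: A_ext (gen_of (is_rat_poly (poly_const _ 1)) H) _ => t x; lra.
Qed.

Lemma A_const m n c : in_A (fun (t : vec m) (x : vec n) => c).
Proof. exact: A_rat (is_rat_poly (poly_const _ c)). Qed.

Lemma A_mul_gen m n (g f : vec m -> vec n -> R) :
  is_generator g -> in_A f -> in_A (fun t x => g t x * f t x).
Proof.
move=> Hg Hf; elim: Hf.
- apply: A_ext (@A_zero m n) _ => t x; lra.
- move=> f' [R2 [Q2 [cs2 [HR2 [HQ2 [Hn2 [Hc2 Hf2]]]]]]].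
  move: Hg => [R1 [Q1 [cs1 [HR1 [HQ1 [Hn1 [Hc1 Hg1]]]]]]].
  apply: A_gen; exists (fun t => R1 t * R2 t), (fun x => Q1 x * Q2 x), (cs1 ++ cs2).
  split; first exact: is_rat_mul. split; first by constructor.
  split; first by move: Hn1; case: (cs1).
  split. move=> c Hc; case: (List.in_app_or _ _ _ Hc); auto.
  move=> t x; rewrite Hg1 Hf2 map_cat. have := prodl_app; rewrite /prodl => ->. lra.
- move=> f1 f2 _ H1 _ H2; apply: A_ext (A_add H1 H2) _ => t x; lra.
- move=> c f1 _ H1; apply: A_ext (A_scal c H1) _ => t x; lra.
- move=> f1 f2 _ H1 E; apply: A_ext H1 _ => t x; by rewrite E.
Qed.

Lemma A_mul m n (f g : vec m -> vec n -> R) :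
  in_A f -> in_A g -> in_A (fun t x => f t x * g t x).
Proof.
move=> Hf Hg; elim: Hf.
- apply: A_ext (@A_zero m n) _ => t x; lra.
- move=> f' Hf'; exact: A_mul_gen.
- move=> f1 f2 _ H1 _ H2; apply: A_ext (A_add H1 H2) _ => t x; lra.
- move=> c f1 _ H1; apply: A_ext (A_scal c H1) _ => t x; lra.
- move=> f1 f2 _ H1 E; apply: A_ext H1 _ => t x; by rewrite E.
Qed.

Lemma A_sub m n (f g : vec m -> vec n -> R) :
  in_A f -> in_A g -> in_A (fun t x => f t x - g t x).
Proof. move=> Hf Hg; apply: A_ext (A_add Hf (A_scal (-1) Hg)) _ => t x; lra. Qed.

Lemma A_pow m n (f : vec m -> vec n -> R) e : in_A f -> in_A (fun t x => f t x ^ e).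
Proof.
move=> Hf; elim: e => [|e IH]; first exact: A_const.
apply: A_ext (A_mul Hf IH) _ => t x /=; lra.
Qed.


Definition is_aff m k (F : vec m -> vec k -> R) : Prop :=
  exists P0 P, is_poly P0 /\ (forall j, is_poly (P j)) /\
    forall t x, F t x = affine_form P0 P t x.

Lemma affine_sumL m k (P0 : vec m -> R) P t (x : vec k) :
  affine_form P0 P t x = P0 t + sumL (enum 'I_k) (fun j => P j t * x j).
Proof. by []. Qed.

Lemma A_ind m k (A : ind_set) (F : vec m -> vec k -> R) : is_aff F -> in_A (fun t x => Defs.ind A (F t x)).
Proof.
move=> [P0 [P [H0 [HP HF]]]]; apply: A_gen.
exists (fun _ => 1), (fun _ => 1), [:: Factor A P0 P].
split; first exact: is_rat_poly (poly_const _ 1).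
split; first exact: poly_const.
split=> //. split. by move=> c [<-|[]]; split.
move=> t x /=; rewrite /eval_factor /= HF; lra.
Qed.

Lemma aff_add m k (F G : vec m -> vec k -> R) : is_aff F -> is_aff G -> is_aff (fun t x => F t x + G t x).
Proof.
move=> [P0 [P [H0 [HP HF]]]] [Q0 [Q [H0' [HQ HG]]]].
exists (fun t => P0 t + Q0 t), (fun j t => P j t + Q j t).
split; first by constructor. split; first by move=> j; constructor.
move=> t x; rewrite HF HG !affine_sumL.
have E : sumL (enum 'I_k) (fun j => (P j t + Q j t) * x j) = sumL (enum 'I_k) (fun j => P j t * x j) + sumL (enum 'I_k) (fun j => Q j t * x j).
  rewrite -sumL_add; apply: sumL_ext => j; lra.
rewrite E; lra.
Qed.

Lemma aff_mulp m k (c : vec m -> R) (F : vec m -> vec k -> R) : is_poly c -> is_aff F -> is_aff (fun t x => c t * F t x).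
Proof.
move=> Hc [P0 [P [H0 [HP HF]]]].
exists (fun t => c t * P0 t), (fun j t => c t * P j t).
split; first by constructor. split; first by move=> j; constructor.
move=> t x; rewrite HF !affine_sumL.
have E : sumL (enum 'I_k) (fun j => (c t * P j t) * x j) = c t * sumL (enum 'I_k) (fun j => P j t * x j).
  rewrite -sumL_scal; apply: sumL_ext => j; lra.
rewrite E; lra.
Qed.

Lemma aff_poly m k (c : vec m -> R) : is_poly c -> is_aff (fun t (x : vec k) => c t).
Proof.
move=> Hc; exists c, (fun _ _ => 0); split=> //; split=> [j|]; first exact: poly_const.
move=> t x; rewrite affine_sumL.
have E : sumL (enum 'I_k) (fun j => 0 * x j) = sumL (enum 'I_k) (fun _ => 0) by apply: sumL_ext => j; lra.
rewrite E sumL_zero; lra.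
Qed.

Lemma aff_const m k c : is_aff (fun (t : vec m) (x : vec k) => c).
Proof. exact: aff_poly (poly_const _ c). Qed.

Lemma aff_opp m k (F : vec m -> vec k -> R) : is_aff F -> is_aff (fun t x => - F t x).
Proof.
move=> H; have := aff_mulp (poly_const _ (-1)) H.
move=> [P0 [P [H0 [HP HF]]]]; exists P0, P; do 2 split=> //.
move=> t x; rewrite -HF; lra.
Qed.

Lemma aff_sub m k (F G : vec m -> vec k -> R) : is_aff F -> is_aff G -> is_aff (fun t x => F t x - G t x).
Proof. move=> HF HG; exact: aff_add HF (aff_opp HG). Qed.

Lemma A_sumL m k (s : list 'I_k) (P : 'I_k -> vec m -> R) :
  (forall j, is_poly (P j)) -> in_A (fun t x => sumL s (fun j => P j t * x j)).
Proof.
move=> HP; elim: s => [|j s IH].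
  exact: A_const.
apply: A_ext (A_add (A_mul (@A_rat m k _ (is_rat_poly (HP j))) (@A_polyx m k _ (poly_coord j))) IH) _.
by move=> t x.
Qed.

Lemma A_aff m k (F : vec m -> vec k -> R) : is_aff F -> in_A F.
Proof.
move=> [P0 [P [H0 [HP HF]]]].
apply: A_ext (A_add (@A_rat m k _ (is_rat_poly H0)) (A_sumL (enum 'I_k) HP)) _.
move=> t x; by rewrite HF affine_sumL.
Qed.

Definition is_end m k (l : vec m -> vec k -> R) : Prop :=
  exists al be, is_aff al /\ is_poly be /\ forall t x, l t x = al t x * inv (be t).

Lemma A_end m k (l : vec m -> vec k -> R) : is_end l -> in_A l.
Proof.
move=> [al [be [Ha [Hb Hl]]]].
apply: A_ext (A_mul (A_aff Ha) (@A_rat m k _ (is_rat_inv Hb))) _ => t x; by rewrite Hl.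
Qed.

Definition lt_ind (u v : R) : R := if Rlt_dec u v then 1 else 0.

Lemma lt_ind_iff u v u' v' : (u < v <-> u' < v') -> lt_ind u v = lt_ind u' v'.
Proof.
move=> H; rewrite /lt_ind; case: Rlt_dec => h1; case: Rlt_dec => h2 //; exfalso; tauto.
Qed.

Lemma sign_frac z y : y <> 0 -> (0 < z * / y <-> 0 < z * y).
Proof.
move=> hy.
have Hyy : 0 < y * y by nra.
have E : z * y = (z * / y) * (y * y) by field.
rewrite E; split=> h; first by nra.
have : 0 < (z * / y) * (y * y) by [].
move=> h'. apply: (Rmult_lt_reg_r (y * y)) => //. lra.
Qed.

Lemma ind_zero_eq y : Defs.ind IZero y = if Req_EM_T y 0 then 1 else 0.
Proof. by []. Qed.

Lemma A_lt m k (l u : vec m -> vec k -> R) : is_end l -> is_end u ->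
  in_A (fun t x => lt_ind (l t x) (u t x)).
Proof.
move=> [al [be [Ha [Hb Hl]]]] [al' [be' [Ha' [Hb' Hu]]]].
pose Z t x := Defs.ind IZero (be t).
pose Z' t x := Defs.ind IZero (be' t).
have HZ : in_A (fun t (x : vec k) => Defs.ind IZero (be t)) by apply: A_ind; apply: aff_poly.
have HZ' : in_A (fun t (x : vec k) => Defs.ind IZero (be' t)) by apply: A_ind; apply: aff_poly.
have H1 : in_A (fun t x => Defs.ind IPos (be' t * al' t x)) by apply: A_ind; apply: aff_mulp.
have H2 : in_A (fun t x => Defs.ind IPos (be t * (- al t x))) by apply: A_ind; apply: aff_mulp => //; apply: aff_opp.
have H3 : in_A (fun t x => Defs.ind IPos ((be t * be' t) * (be t * al' t x - be' t * al t x))).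
  apply: A_ind; apply: aff_mulp; first by constructor.
  by apply: aff_sub; apply: aff_mulp.
have H1m := A_sub (A_const m k 1) HZ.
have H1m' := A_sub (A_const m k 1) HZ'.
apply: A_ext (A_add (A_add (A_mul (A_mul HZ H1m') H1) (A_mul (A_mul H1m HZ') H2))
   (A_mul (A_mul H1m H1m') H3)) _ => t x.
rewrite Hl Hu /inv /Defs.ind /=.
destruct (Req_dec_T (be t) 0) as [h|h]; destruct (Req_dec_T (be' t) 0) as [h'|h']; simpl.
- rewrite /lt_ind; rewrite !Rmult_0_r; repeat destruct (Rlt_dec _ _); simpl; lra.
- have K : (0 < be' t * al' t x <-> al t x * 0 < al' t x * / be' t).
    rewrite Rmult_0_r (Rmult_comm (be' t)) sign_frac //.
  rewrite /lt_ind; repeat destruct (Rlt_dec _ _); simpl; try lra; exfalso; tauto.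
- have K : (0 < be t * - al t x <-> al t x * / be t < al' t x * 0).
    rewrite Rmult_0_r (Rmult_comm (be t)).
    have E : - al t x * / be t = - (al t x * / be t) by ring.
    rewrite -sign_frac // E; lra.
  rewrite /lt_ind; repeat destruct (Rlt_dec _ _); simpl; try lra; exfalso; tauto.
- have hbb : be t * be' t <> 0 by move=> /Rmult_integral [] //.
  have E : al' t x * / be' t - al t x * / be t = (be t * al' t x - be' t * al t x) * / (be t * be' t) by field.
  have K : (0 < be t * be' t * (be t * al' t x - be' t * al t x) <-> al t x * / be t < al' t x * / be' t).
    rewrite Rmult_comm -sign_frac // -E; lra.
  rewrite /lt_ind; repeat destruct (Rlt_dec _ _); simpl; try lra; exfalso; tauto.
Qed.

Lemma rmax_split u v : Rmax u v = (1 - lt_ind v u) * v + lt_ind v u * u.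
Proof. rewrite /Rmax /lt_ind; destruct (Rle_dec _ _); destruct (Rlt_dec _ _); simpl; lra. Qed.
Lemma rmin_split u v : Rmin u v = (1 - lt_ind v u) * u + lt_ind v u * v.
Proof. rewrite /Rmin /lt_ind; destruct (Rle_dec _ _); destruct (Rlt_dec _ _); simpl; lra. Qed.
Lemma psi_split (P : R -> R) u v : P (Rmax u v) = (1 - lt_ind v u) * P v + lt_ind v u * P u.
Proof. rewrite /Rmax /lt_ind; destruct (Rle_dec _ _); destruct (Rlt_dec _ _); simpl; lra. Qed.
Lemma psi_split' (P : R -> R) u v : P (Rmin u v) = (1 - lt_ind v u) * P u + lt_ind v u * P v.
Proof. rewrite /Rmin /lt_ind; destruct (Rle_dec _ _); destruct (Rlt_dec _ _); simpl; lra. Qed.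

Lemma A_max m k (ls : list (vec m -> vec k -> R)) : forall (Psi : R -> vec m -> vec k -> R) l0,
  is_end l0 -> (forall l, List.In l ls -> is_end l) ->
  (forall l, l = l0 \/ List.In l ls -> in_A (fun t x => Psi (l t x) t x)) ->
  in_A (fun t x => Psi (List.fold_right Rmax (l0 t x) (map (fun l => l t x) ls)) t x).
Proof.
elim: ls => [|l ls IH] Psi l0 H0 Hls HPsi /=; first by apply: HPsi; left.
apply: (IH (fun y t x => Psi (Rmax (l t x) y) t x) l0) => //.
  by move=> l' h; apply: Hls; right.
move=> l' hl'.
have El : is_end l by apply: Hls; left.
have El' : is_end l' by case: hl' => [->|h] //; apply: Hls; right.
have Hlt := A_lt El' El.
have A1 : in_A (fun t x => Psi (l' t x) t x) by apply: HPsi; case: hl' => [->|h]; [left|right; right].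
have A0 : True by [].
have A2 : in_A (fun t x => Psi (l t x) t x) by apply: HPsi; right; left.
apply: A_ext (A_add (A_mul (A_sub (A_const m k 1) Hlt) A1) (A_mul Hlt A2)) _ => t x.
by rewrite (psi_split (fun y => Psi y t x)).
Qed.

Lemma A_min m k (ls : list (vec m -> vec k -> R)) : forall (Psi : R -> vec m -> vec k -> R) l0,
  is_end l0 -> (forall l, List.In l ls -> is_end l) ->
  (forall l, l = l0 \/ List.In l ls -> in_A (fun t x => Psi (l t x) t x)) ->
  in_A (fun t x => Psi (List.fold_right Rmin (l0 t x) (map (fun l => l t x) ls)) t x).
Proof.
elim: ls => [|l ls IH] Psi l0 H0 Hls HPsi /=; first by apply: HPsi; left.
apply: (IH (fun y t x => Psi (Rmin (l t x) y) t x) l0) => //.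
  by move=> l' h; apply: Hls; right.
move=> l' hl'.
have El : is_end l by apply: Hls; left.
have El' : is_end l' by case: hl' => [->|h] //; apply: Hls; right.
have Hlt := A_lt El' El.
have A1 : in_A (fun t x => Psi (l' t x) t x) by apply: HPsi; case: hl' => [->|h]; [left|right; right].
have A0 : True by [].
have A2 : in_A (fun t x => Psi (l t x) t x) by apply: HPsi; right; left.
apply: A_ext (A_add (A_mul (A_sub (A_const m k 1) Hlt) A2) (A_mul Hlt A1)) _ => t x.
by rewrite (psi_split' (fun y => Psi y t x)).
Qed.

Lemma end_const m k c : is_end (fun (t : vec m) (x : vec k) => c).
Proof.
exists (fun _ _ => c), (fun _ => 1); split; first exact: aff_const.
split; first exact: poly_const.
move=> t x; rewrite /inv; destruct (Req_dec_T 1 0) as [h|h]; simpl; [lra|field].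
Qed.


Lemma exc (h g G : R -> R) (ps : list R) : forall a b, a <= b ->
  (forall t, is_derive G t (g t)) -> (forall t, continuous g t) ->
  (forall t, a < t < b -> ~ List.In t ps -> h t = g t) -> is_RInt h a b (G b - G a).
Proof.
elim: ps => [|p ps IH] a b hab HG Hg Hh.
- have H := @is_RInt_derive R_CompleteNormedModule G g a b (fun t _ => HG t) (fun t _ => Hg t).
  apply: is_RInt_ext H => t; rewrite Rmin_left // Rmax_right // => ht.
  by rewrite Hh.
- case: (Rlt_dec a p) => h1; case: (Rlt_dec p b) => h2.
  + have H1 : is_RInt h a p (G p - G a).
      apply: IH => //; first lra. move=> t ht hn; apply: Hh; first lra.
      case => [E|//]; lra.
    have H2 : is_RInt h p b (G b - G p).
      apply: IH => //; first lra. move=> t ht hn; apply: Hh; first lra.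
      case => [E|//]; lra.
    have := is_RInt_Chasles _ _ _ _ _ _ H1 H2.
    have -> : plus (G p - G a) (G b - G p) = G b - G a by rewrite /plus /=; lra.
    done.
  all: apply: IH => // t ht hn; apply: Hh => //; case => [E|//]; lra.
Qed.

Definition lows (ls : list R) (t : R) := prodl (map (fun l => lt_ind l t) ls).
Definition ups (us : list R) (t : R) := prodl (map (fun u => lt_ind t u) us).
Definition Phi (e : nat) (L U : R) := lt_ind L U * ((U ^ (e.+1) - L ^ (e.+1)) / INR (e.+1)).

Lemma lows_max a ls t : a < t -> lows ls t = lt_ind (List.fold_right Rmax a ls) t.
Proof.
move=> hat; elim: ls => [|l ls IH] /=.
  by rewrite /lows /= /lt_ind; destruct (Rlt_dec _ _).
rewrite /lows /= -/(lows ls t) IH /lt_ind /Rmax.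
repeat destruct (Rlt_dec _ _); repeat destruct (Rle_dec _ _); simpl; lra.
Qed.

Lemma ups_min b us t : t < b -> ups us t = lt_ind t (List.fold_right Rmin b us).
Proof.
move=> hat; elim: us => [|l ls IH] /=.
  by rewrite /ups /= /lt_ind; destruct (Rlt_dec _ _).
rewrite /ups /= -/(ups ls t) IH /lt_ind /Rmin.
repeat destruct (Rlt_dec _ _); repeat destruct (Rle_dec _ _); simpl; lra.
Qed.

Lemma max_ge a ls : a <= List.fold_right Rmax a ls.
Proof. elim: ls => [|l ls IH] /=; first lra. have := Rmax_r l (List.fold_right Rmax a ls); lra. Qed.
Lemma min_le b ls : List.fold_right Rmin b ls <= b.
Proof. elim: ls => [|l ls IH] /=; first lra. have := Rmin_r l (List.fold_right Rmin b ls); lra. Qed.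

Lemma zero_der t : is_derive (fun _ : R => 0) t 0.
Proof. apply: is_derive_const. Qed.
Lemma zero_cont t : continuous (fun _ : R => 0) t.
Proof. apply: continuous_const. Qed.

Lemma pow_der K e t : is_derive (fun t => K * t ^ (e.+1) / INR (e.+1)) t (K * t ^ e).
Proof.
have hn : INR (e.+1) <> 0 by apply: not_0_INR.
auto_derive => //. simpl in hn. field. exact: hn.
Qed.

Lemma pow_cont K e t : continuous (fun t => K * t ^ e) t.
Proof. apply: ex_derive_continuous; auto_derive => //. Qed.

Lemma exc0 (h : R -> R) ps a b : a <= b ->
  (forall t, a < t < b -> ~ List.In t ps -> h t = 0) -> is_RInt h a b 0.
Proof.
move=> hab H; have := exc (g := fun _ => 0) (G := fun _ => 0) hab zero_der zero_cont H.
by rewrite Rminus_diag.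
Qed.

Lemma core a b e K ls us ps (h : R -> R) : a < b ->
  (forall t, a < t < b -> ~ List.In t ps -> h t = K * (t ^ e * (lows ls t * ups us t))) ->
  is_RInt h a b (K * Phi e (List.fold_right Rmax a ls) (List.fold_right Rmin b us)).
Proof.
move=> hab Hh.
set L := List.fold_right Rmax a ls; set U := List.fold_right Rmin b us.
have haL : a <= L by apply: max_ge.
have hUb : U <= b by apply: min_le.
have Hh' : forall t, a < t < b -> ~ List.In t ps -> h t = K * (t ^ e * (lt_ind L t * lt_ind t U)).
  move=> t ht hn; rewrite Hh // (@lows_max a ls t) ?(@ups_min b us t) //; lra.
rewrite /Phi.
case: (Rlt_dec L U) => hLU.
- have H1 : is_RInt h a L 0.
    apply: (@exc0 h ps) => // t ht hn; rewrite Hh' //; last lra.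
    rewrite /lt_ind; repeat destruct (Rlt_dec _ _); simpl; lra.
  have H2 : is_RInt h L U (K * U ^ e.+1 / INR e.+1 - K * L ^ e.+1 / INR e.+1).
    apply: (exc (g := fun t => K * t ^ e) (G := fun t => K * t ^ (e.+1) / INR (e.+1)) (ps := ps)).
    + lra.
    + exact: pow_der.
    + exact: pow_cont.
    + move=> t ht hn; rewrite Hh' //; last lra.
      rewrite /lt_ind; repeat destruct (Rlt_dec _ _); simpl; lra.
  have H3 : is_RInt h U b 0.
    apply: (@exc0 h ps) => // t ht hn; rewrite Hh' //; last lra.
    rewrite /lt_ind; repeat destruct (Rlt_dec _ _); simpl; lra.
  have := is_RInt_Chasles _ _ _ _ _ _ (is_RInt_Chasles _ _ _ _ _ _ H1 H2) H3.
  have hn : INR (e.+1) <> 0 by apply: not_0_INR.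
  have -> : lt_ind L U = 1 by rewrite /lt_ind; destruct (Rlt_dec _ _).
  have -> : plus (plus 0 (K * U ^ e.+1 / INR e.+1 - K * L ^ e.+1 / INR e.+1)) 0 =
    K * (1 * ((U ^ e.+1 - L ^ e.+1) / INR e.+1)) by rewrite /plus /=; field.
  done.
- have -> : lt_ind L U = 0 by rewrite /lt_ind; destruct (Rlt_dec _ _).
  rewrite Rmult_0_l Rmult_0_r.
  apply: (@exc0 h ps); first lra.
  move=> t ht hn; rewrite Hh' //.
  rewrite /lt_ind; repeat destruct (Rlt_dec _ _); simpl; try lra.
Qed.


Lemma sumL_map {I J : Type} (s : list I) (g : I -> J) F : sumL (map g s) F = sumL s (fun i => F (g i)).
Proof. elim: s => [|i s IH] //=; rewrite /sumL /=; rewrite /sumL in IH; by rewrite IH. Qed.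

Lemma sumL_rcons {I : Type} (s : list I) z F : sumL (rcons s z) F = sumL s F + F z.
Proof. rewrite -cats1 sumL_app /sumL /=; lra. Qed.

Lemma snoc_widen k (x : vec k) t j : snoc x t (widen_ord (leqnSn k) j) = x j.
Proof.
have -> : widen_ord (leqnSn k) j = lift ord_max j by apply: ord_inj; by rewrite lift_max.
by rewrite /snoc liftK.
Qed.

Lemma snoc_max k (x : vec k) t : snoc x t ord_max = t.
Proof. by rewrite /snoc unlift_none. Qed.

Lemma affine_snoc m k (P0 : vec m -> R) (P : 'I_k.+1 -> vec m -> R) th (x : vec k) t :
  affine_form P0 P th (snoc x t) =
  P ord_max th * t + affine_form P0 (fun j => P (widen_ord (leqnSn k) j)) th x.
Proof.
rewrite !affine_sumL enum_ordSr sumL_rcons sumL_map snoc_max.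
rewrite (@sumL_ext _ _ (fun i => P (widen_ord (leqnSn k) i) th * snoc x t (widen_ord (leqnSn k) i))
   (fun j => P (widen_ord (leqnSn k) j) th * x j)) => [|j]; last by rewrite snoc_widen.
by rewrite -Rplus_assoc (Rplus_comm (P0 th + _)).
Qed.

Definition pexp k (l : list ((vec k -> R) * nat)) (x : vec k) (t : R) : R :=
  sumL l (fun qe => qe.1 x * t ^ qe.2).
Definition all_poly k (l : list ((vec k -> R) * nat)) := forall qe, List.In qe l -> is_poly qe.1.

Definition mulqe k (qe qe' : (vec k -> R) * nat) : (vec k -> R) * nat :=
  (fun x => qe.1 x * qe'.1 x, (qe.2 + qe'.2)%nat).
Fixpoint pmul1 k (qe : (vec k -> R) * nat) l2 :=
  match l2 with nil => nil | qe' :: l => mulqe qe qe' :: pmul1 qe l end.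
Fixpoint pmul k (l1 l2 : list ((vec k -> R) * nat)) :=
  match l1 with nil => nil | qe :: l => pmul1 qe l2 ++ pmul l l2 end.

Lemma pexp_app k l1 l2 (x : vec k) t : pexp (l1 ++ l2) x t = pexp l1 x t + pexp l2 x t.
Proof. by rewrite /pexp sumL_app. Qed.

Lemma pexp_mul1 k qe l2 (x : vec k) t : pexp (pmul1 qe l2) x t = qe.1 x * t ^ qe.2 * pexp l2 x t.
Proof.
elim: l2 => [|qe' l IH] /=; rewrite /pexp /sumL /=; first lra.
rewrite /pexp /sumL in IH; rewrite IH /= pow_add; ring.
Qed.

Lemma pexp_mul k l1 l2 (x : vec k) t : pexp (pmul l1 l2) x t = pexp l1 x t * pexp l2 x t.
Proof.
elim: l1 => [|qe l IH] /=; first by rewrite /pexp /sumL /=; lra.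
rewrite pexp_app pexp_mul1 IH /pexp /sumL /=; ring.
Qed.

Lemma all_poly_app k (l1 l2 : list ((vec k -> R) * nat)) : all_poly l1 -> all_poly l2 -> all_poly (l1 ++ l2).
Proof. move=> H1 H2 qe hq; case: (List.in_app_or _ _ _ hq); auto. Qed.

Lemma all_poly_mul1 k qe (l2 : list ((vec k -> R) * nat)) : is_poly qe.1 -> all_poly l2 -> all_poly (pmul1 qe l2).
Proof.
move=> Hq; elim: l2 => [|qe' l2 IH2] H2 /=; first by move=> ? [].
move=> q [<-|hq]; first by (constructor; [exact: Hq| apply: H2; left]).
apply: (IH2 _ q hq) => q' h'; apply: H2; by right.
Qed.

Lemma all_poly_mul k (l1 l2 : list ((vec k -> R) * nat)) : all_poly l1 -> all_poly l2 -> all_poly (pmul l1 l2).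
Proof.
elim: l1 => [|qe l IH] H1 H2 /=; first by move=> ? [].
apply: all_poly_app; last by apply: IH => // q hq; apply: H1; by right.
apply: all_poly_mul1 => //; apply: H1; by left.
Qed.

Lemma poly_snoc k (P : vec k.+1 -> R) : is_poly P ->
  exists l, all_poly l /\ forall x t, P (snoc x t) = pexp l x t.
Proof.
elim.
- move=> c; exists [:: (fun _ => c, 0%nat)]; split.
    move=> qe [<-|[]]; exact: poly_const.
  move=> x t; rewrite /pexp /sumL /=; lra.
- move=> i; case E: (unlift ord_max i) => [j|].
  + exists [:: (fun x : vec k => x j, 0%nat)]; split.
      move=> qe [<-|[]]; exact: poly_coord.
    move=> x t; rewrite /pexp /sumL /= /snoc E; lra.
  + exists [:: (fun _ : vec k => 1, 1%nat)]; split.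
      move=> qe [<-|[]]; exact: poly_const.
    move=> x t; rewrite /pexp /sumL /= /snoc E; lra.
- move=> p q _ [l1 [H1 E1]] _ [l2 [H2 E2]]; exists (l1 ++ l2); split.
    exact: all_poly_app.
  move=> x t; by rewrite pexp_app E1 E2.
- move=> p q _ [l1 [H1 E1]] _ [l2 [H2 E2]]; exists (pmul l1 l2); split.
    exact: all_poly_mul.
  move=> x t; by rewrite pexp_mul E1 E2.
- move=> p q _ [l [H E]] Epq; exists l; split=> // x t; by rewrite -Epq.
Qed.


Definition tfac m k := (ind_set * (vec m -> R) * (vec m -> vec k -> R))%type.
Definition tf m k (f : tfac m k) t x s := Defs.ind f.1.1 (f.1.2 t * s + f.2 t x).
Definition tfac_ok m k (f : tfac m k) := is_poly f.1.2 /\ is_aff f.2.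
Definition evl m k (ls : list (vec m -> vec k -> R)) t x := map (fun l => l t x) ls.

Lemma prodl_cons x l : prodl (x :: l) = x * prodl l. Proof. by []. Qed.
Lemma map_cons' {I J : Type} (F : I -> J) x s : map F (x :: s) = F x :: map F s. Proof. by []. Qed.
Lemma lows_cons l ls s : lows (l :: ls) s = lt_ind l s * lows ls s. Proof. by []. Qed.
Lemma ups_cons u us s : ups (u :: us) s = lt_ind s u * ups us s. Proof. by []. Qed.

Lemma thr_pos c d s : 0 < c -> (0 < c * s + d <-> - d * / c < s).
Proof.
move=> hc; have E : c * s + d = c * (s - (- d * / c)) by field; lra.
rewrite E; split=> h.
- have : 0 < s - - d * / c by apply: (Rmult_lt_reg_l c); lra.
  lra.
- apply: Rmult_lt_0_compat; lra.
Qed.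

Lemma thr_neg c d s : c < 0 -> (0 < c * s + d <-> s < - d * / c).
Proof.
move=> hc; have E : c * s + d = (- c) * (- d * / c - s) by field; lra.
rewrite E; split=> h.
- have : 0 < - d * / c - s by apply: (Rmult_lt_reg_l (- c)); lra.
  lra.
- apply: Rmult_lt_0_compat; lra.
Qed.

Lemma ne_thr c d s : c <> 0 -> s <> - d * / c -> c * s + d <> 0.
Proof. move=> hc hs E; apply: hs; field_simplify_eq => //; lra. Qed.

Lemma ind_nonneg_pos y : y <> 0 -> Defs.ind INonneg y = Defs.ind IPos y.
Proof. move=> hy; rewrite /Defs.ind; destruct (Rle_dec _ _); destruct (Rlt_dec _ _); simpl; lra. Qed.
Lemma ind_zero_nz y : y <> 0 -> Defs.ind IZero y = 0.
Proof. move=> hy; rewrite /Defs.ind; destruct (Req_dec_T _ _); simpl; lra. Qed.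
Lemma ind_pos_lt y : Defs.ind IPos y = lt_ind 0 y.
Proof. by rewrite /Defs.ind /lt_ind; destruct (Rlt_dec _ _). Qed.
Lemma ind_pos_1 y : 0 < y -> Defs.ind IPos y = 1.
Proof. move=> hy; rewrite /Defs.ind; destruct (Rlt_dec _ _); simpl; lra. Qed.
Lemma ind_pos_0 y : y <= 0 -> Defs.ind IPos y = 0.
Proof. move=> hy; rewrite /Defs.ind; destruct (Rlt_dec _ _); simpl; lra. Qed.
Lemma ind_zero_1 : Defs.ind IZero 0 = 1.
Proof. rewrite /Defs.ind; destruct (Req_dec_T _ _); simpl; lra. Qed.
Lemma inv_nz y : y <> 0 -> inv y = / y.
Proof. move=> hy; rewrite /inv; destruct (Req_dec_T _ _); simpl; lra. Qed.

Lemma main_ind m k a b e (hab : a < b) (fs : list (tfac m k)) :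
  (forall f, List.In f fs -> tfac_ok f) ->
  forall ls us, (forall l, List.In l ls -> is_end l) -> (forall u, List.In u us -> is_end u) ->
  exists V, in_A V /\ forall t x K ps (h : R -> R),
   (forall s, a < s < b -> ~ List.In s ps -> h s = K * (s ^ e * (lows (evl ls t x) s * ups (evl us t x) s * prodl (map (fun f => tf f t x s) fs)))) ->
   is_RInt h a b (K * V t x).
Proof.
elim: fs => [|f fs IH] Hfs ls us Hls Hus.
- exists (fun t x => Phi e (List.fold_right Rmax a (evl ls t x)) (List.fold_right Rmin b (evl us t x))).
  split.
  + apply: (@A_max m k ls (fun L t x => Phi e L (List.fold_right Rmin b (evl us t x))) (fun _ _ => a)).
    * exact: end_const.
    * exact: Hls.
    * move=> l hl.
      have El : is_end l by case: hl => [->|h]; [exact: end_const | exact: Hls].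
      apply: (@A_min m k us (fun U t x => Phi e (l t x) U) (fun _ _ => b)).
      -- exact: end_const.
      -- exact: Hus.
      -- move=> u hu.
         have Eu : is_end u by case: hu => [->|h]; [exact: end_const | exact: Hus].
         rewrite /Phi. apply: A_mul; first exact: A_lt.
         apply: A_ext (A_scal (/ INR e.+1) (A_sub (A_pow e.+1 (A_end Eu)) (A_pow e.+1 (A_end El)))) _ => t x.
         rewrite /Rdiv; ring.
  + move=> t x K ps h Hh. apply: (@core a b e K _ _ ps h hab) => s hs hn.
    rewrite Hh //. rewrite /prodl /=. ring.
- move: f Hfs => [[S c] d] Hfs.
  have [Hc Hd] : tfac_ok (S, c, d) by apply: Hfs; left.
  have Hfs' : forall f, List.In f fs -> tfac_ok f by move=> f' h; apply: Hfs; right.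
  move: Hc Hd => /= Hc Hd.
  pose p := fun t x => - d t x * inv (c t).
  have Ep : is_end p.
    exists (fun t x => - d t x), c; split; first exact: aff_opp.
    by split.
  have [V0 [HV0 S0]] := IH Hfs' ls us Hls Hus.
  have [V1 [HV1 S1]] : exists V, in_A V /\ forall t x K ps (h : R -> R),
   (forall s, a < s < b -> ~ List.In s ps -> h s = K * (s ^ e * (lows (evl (p :: ls) t x) s * ups (evl us t x) s * prodl (map (fun f => tf f t x s) fs)))) ->
   is_RInt h a b (K * V t x).
    apply: IH => //. by move=> l [<-|hl]; auto.
  have [V2 [HV2 S2]] : exists V, in_A V /\ forall t x K ps (h : R -> R),
   (forall s, a < s < b -> ~ List.In s ps -> h s = K * (s ^ e * (lows (evl ls t x) s * ups (evl (p :: us) t x) s * prodl (map (fun f => tf f t x s) fs)))) ->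
   is_RInt h a b (K * V t x).
    apply: IH => //. by move=> l [<-|hl]; auto.
  exists (fun t x => Defs.ind IZero (c t) * Defs.ind S (d t x) * V0 t x +
    (if S is IZero then 0 else Defs.ind IPos (c t) * V1 t x + Defs.ind IPos (- c t) * V2 t x)).
  split.
  + have Hc0 : in_A (fun t (x : vec k) => Defs.ind IZero (c t)) by apply: A_ind; apply: aff_poly.
    have HS : in_A (fun t x => Defs.ind S (d t x)) by apply: A_ind.
    have Hcp : in_A (fun t (x : vec k) => Defs.ind IPos (c t)) by apply: A_ind; apply: aff_poly.
    have Hcn : in_A (fun t (x : vec k) => Defs.ind IPos (- c t)).
      apply: A_ind; apply: aff_poly.
      by apply: (poly_ext (poly_mul (poly_const _ (-1)) Hc)) => t; ring.
    have W : in_A (fun t x => if S is IZero then 0 else Defs.ind IPos (c t) * V1 t x + Defs.ind IPos (- c t) * V2 t x).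
      case: (S); [exact: A_const| |]; exact: A_add (A_mul Hcp HV1) (A_mul Hcn HV2).
    exact: A_add (A_mul (A_mul Hc0 HS) HV0) W.
  + move=> t x K ps h Hh.
    pose Q := fun s => K * (s ^ e * (lows (evl ls t x) s * ups (evl us t x) s * prodl (map (fun f => tf f t x s) fs))).
    have Hh' : forall s, a < s < b -> ~ List.In s ps -> h s = Defs.ind S (c t * s + d t x) * Q s.
      move=> s hs hn; rewrite Hh // /Q.
      have -> : tf (S, c, d) t x s = Defs.ind S (c t * s + d t x) by [].
      ring.
    case: (total_order_T (c t) 0) => [[hc|hc]|hc].
    * have hc0 : c t <> 0 by lra.
      have Ep' : p t x = - d t x * / c t by rewrite /p inv_nz.
      have z1 := ind_zero_nz hc0.
      have z2 : Defs.ind IPos (c t) = 0 by apply: ind_pos_0; lra.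
      have z3 : Defs.ind IPos (- c t) = 1 by apply: ind_pos_1; lra.
      rewrite z1 z2 z3.
      destruct S.
      -- have -> : K * (0 * Defs.ind IZero (d t x) * V0 t x + 0) = 0 by ring.
         apply: (@exc0 h (p t x :: ps)); first lra.
         move=> s hs hn. rewrite Hh' //; last by move=> hi; apply: hn; right.
         rewrite ind_zero_nz; first ring.
         apply: ne_thr => // E; apply: hn; left; by rewrite Ep'.
      -- have -> : K * (0 * Defs.ind INonneg (d t x) * V0 t x + (0 * V1 t x + 1 * V2 t x)) = K * V2 t x by ring.
         apply: (S2 t x K (p t x :: ps) h) => s hs hn.
         have hps : p t x <> s by move=> E; apply: hn; left.
         rewrite Hh' //; last by move=> hi; apply: hn; right.
         rewrite ind_nonneg_pos; last by apply: ne_thr => // E; apply: hps; rewrite Ep'.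
         rewrite ind_pos_lt (@lt_ind_iff _ _ s (p t x)); last by rewrite Ep'; apply: thr_neg.
         rewrite /evl map_cons' ups_cons /Q /evl. ring.
      -- have -> : K * (0 * Defs.ind IPos (d t x) * V0 t x + (0 * V1 t x + 1 * V2 t x)) = K * V2 t x by ring.
         apply: (S2 t x K ps h) => s hs hn.
         rewrite Hh' //.
         rewrite ind_pos_lt (@lt_ind_iff _ _ s (p t x)); last by rewrite Ep'; apply: thr_neg.
         rewrite /evl map_cons' ups_cons /Q /evl. ring.
    * have z1 : Defs.ind IZero (c t) = 1 by rewrite hc ind_zero_1.
      have z2 : Defs.ind IPos (c t) = 0 by apply: ind_pos_0; lra.
      have z3 : Defs.ind IPos (- c t) = 0 by apply: ind_pos_0; lra.
      rewrite z1 z2 z3.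
      have -> : (if S is IZero then 0 else 0 * V1 t x + 0 * V2 t x) = 0 by case: (S); ring.
      have -> : K * (1 * Defs.ind S (d t x) * V0 t x + 0) = (K * Defs.ind S (d t x)) * V0 t x by ring.
      apply: (S0 t x _ ps h) => s hs hn.
      rewrite Hh' // /Q hc Rmult_0_l Rplus_0_l. ring.
    * have hc0 : c t <> 0 by lra.
      have Ep' : p t x = - d t x * / c t by rewrite /p inv_nz.
      have z1 := ind_zero_nz hc0.
      have z2 : Defs.ind IPos (c t) = 1 by apply: ind_pos_1; lra.
      have z3 : Defs.ind IPos (- c t) = 0 by apply: ind_pos_0; lra.
      rewrite z1 z2 z3.
      destruct S.
      -- have -> : K * (0 * Defs.ind IZero (d t x) * V0 t x + 0) = 0 by ring.
         apply: (@exc0 h (p t x :: ps)); first lra.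
         move=> s hs hn. rewrite Hh' //; last by move=> hi; apply: hn; right.
         rewrite ind_zero_nz; first ring.
         apply: ne_thr => // E; apply: hn; left; by rewrite Ep'.
      -- have -> : K * (0 * Defs.ind INonneg (d t x) * V0 t x + (1 * V1 t x + 0 * V2 t x)) = K * V1 t x by ring.
         apply: (S1 t x K (p t x :: ps) h) => s hs hn.
         have hps : p t x <> s by move=> E; apply: hn; left.
         rewrite Hh' //; last by move=> hi; apply: hn; right.
         rewrite ind_nonneg_pos; last by apply: ne_thr => // E; apply: hps; rewrite Ep'.
         rewrite ind_pos_lt (@lt_ind_iff _ _ (p t x) s); last by rewrite Ep'; apply: thr_pos.
         rewrite /evl map_cons' lows_cons /Q /evl. ring.
      -- have -> : K * (0 * Defs.ind IPos (d t x) * V0 t x + (1 * V1 t x + 0 * V2 t x)) = K * V1 t x by ring.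
         apply: (S1 t x K ps h) => s hs hn.
         rewrite Hh' //.
         rewrite ind_pos_lt (@lt_ind_iff _ _ (p t x) s); last by rewrite Ep'; apply: thr_pos.
         rewrite /evl map_cons' lows_cons /Q /evl. ring.
Qed.


Definition conv m k (cf : factor m k.+1) : tfac m k :=
  (f_set cf, f_P cf ord_max, fun t x => affine_form (f_P0 cf) (fun j => f_P cf (widen_ord (leqnSn k) j)) t x).

Lemma in_map_inv {I J : Type} (F : I -> J) y s : List.In y (map F s) -> exists x, F x = y /\ List.In x s.
Proof.
elim: s => [|x s IH] //= [E|h]; first by exists x; auto.
have [x' [E' H']] := IH h; exists x'; auto.
Qed.

Lemma conv_prod m k (cs : list (factor m k.+1)) t x s :
  prodl (map (fun c => eval_factor c t (snoc x s)) cs) = prodl (map (fun f => tf f t x s) (map (@conv m k) cs)).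
Proof.
elim: cs => [|cf cs IH] //=.
rewrite /prodl /= -/(prodl _) -/(prodl _) IH /eval_factor affine_snoc /tf /conv /=. done.
Qed.

Definition Pi m k (fs : list (tfac m k)) t x s := prodl (map (fun f => tf f t x s) fs).

Lemma sum_int m k a b (hab : a < b) (Rf : vec m -> R) (fs : list (tfac m k)) :
  is_rat Rf -> (forall f, List.In f fs -> tfac_ok f) ->
  forall l, all_poly l -> exists W, in_A W /\ forall t x,
    is_RInt (fun s => Rf t * pexp l x s * Pi fs t x s) a b (W t x).
Proof.
move=> HR Hfs; elim=> [|[q e] l IH] Hl.
- exists (fun _ _ => 0); split; first exact: A_const.
  move=> t x; apply: (@exc0 _ nil); first lra.
  move=> s _ _; rewrite /pexp /sumL /=; ring.
- have Hq : is_poly q by apply: (Hl (q, e)); left.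
  have [W [HW SW]] : exists W, in_A W /\ forall t x,
    is_RInt (fun s => Rf t * pexp l x s * Pi fs t x s) a b (W t x).
    apply: IH => qe h; apply: Hl; by right.
  have [V [HV SV]] := @main_ind m k a b e hab fs Hfs nil nil (fun _ h => False_ind _ h) (fun _ h => False_ind _ h).
  exists (fun t x => Rf t * q x * V t x + W t x); split.
    apply: A_add => //; apply: A_mul => //; apply: A_mul.
    exact: A_rat. exact: A_polyx.
  move=> t x.
  have H1 : is_RInt (fun s => Rf t * q x * (s ^ e * Pi fs t x s)) a b (Rf t * q x * V t x).
    apply: (SV t x _ nil) => s _ _; rewrite /Pi /lows /ups /prodl /=; ring.
  have H := is_RInt_plus _ _ _ _ _ _ H1 (SW t x).
  apply: (is_RInt_ext _ _ _ _ _ _ H) => s _.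
  rewrite /plus /= /pexp /sumL /=. ring.
Qed.

Lemma gen_int m k a b (hab : a < b) (g : vec m -> vec k.+1 -> R) : is_generator g ->
  exists V, in_A V /\ forall t x, is_RInt (fun s => g t (snoc x s)) a b (V t x).
Proof.
move=> [Rf [Q [cs [HR [HQ [_ [Hcs Hg]]]]]]].
have [l [Hl EQ]] := poly_snoc HQ.
have Hfs : forall f, List.In f (map (@conv m k) cs) -> tfac_ok f.
  move=> f hf; have [cf [E hcf]] := in_map_inv hf; subst f.
  have [H0 HP] := Hcs cf hcf.
  split=> //=. exists (f_P0 cf), (fun j => f_P cf (widen_ord (leqnSn k) j)); split=> //.
have [W [HW SW]] := sum_int hab HR Hfs Hl.
exists W; split=> // t x.
apply: (is_RInt_ext _ _ _ _ _ _ (SW t x)) => s _.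
rewrite Hg EQ. have := conv_prod cs t x s. rewrite /prodl /Pi => ->. done.
Qed.

Lemma int_A m k a b (hab : a < b) (f : vec m -> vec k.+1 -> R) : in_A f ->
  exists V, in_A V /\ forall t x, is_RInt (fun s => f t (snoc x s)) a b (V t x).
Proof.
elim.
- exists (fun _ _ => 0); split; first exact: A_const.
  move=> t x; apply: (@exc0 _ nil); [lra | by []].
- move=> g Hg; exact: gen_int.
- move=> f1 f2 _ [V1 [H1 S1]] _ [V2 [H2 S2]].
  exists (fun t x => V1 t x + V2 t x); split; first exact: A_add.
  move=> t x; exact: is_RInt_plus _ _ _ _ _ _ (S1 t x) (S2 t x).
- move=> c f1 _ [V1 [H1 S1]].
  exists (fun t x => c * V1 t x); split; first exact: A_scal.
  move=> t x; exact: is_RInt_scal _ _ _ _ _ (S1 t x).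
- move=> f1 f2 _ [V1 [H1 S1]] E.
  exists V1; split=> // t x; apply: (is_RInt_ext _ _ _ _ _ _ (S1 t x)) => s _; by rewrite E.
Qed.

Local Close Scope R_scope.

Theorem proposition4p8 (m k : nat) (a b : R) (f : vec m -> vec k.+1 -> R) :
  (0 < m)%nat -> (a < b)%R -> in_A f ->
  in_A (fun (theta : vec m) (x : vec k) => RInt (fun t => f theta (snoc x t)) a b).
Proof.
move=> _ hab Hf.
have [V [HV SV]] := int_A hab Hf.
apply: A_ext HV _ => t x.
by rewrite (is_RInt_unique _ _ _ _ (SV t x)).
Qed.
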